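(* Let $G$ be an infinite group with a finite-index normal infinite cyclic subgroup $Z$, identified with $\mathbb{Z}$ via a generator, and let $\mu$ be a symmetric, finitely supported generating probability measure on $G$ with $S=\operatorname{supp}\mu$. Let $T\subset G$ be a finite set such that every $g\in G$ can be written uniquely as $g=\zeta(g)\tau(g)$ with $\zeta(g)\in Z\cong\mathbb{Z}$ and $\tau(g)\in T$. Let $M\in\mathbb{N}$ be such that $|\zeta(gs)-\zeta(g)|\le M$ for all $g\in G$, $s\in S$. Let $(X_t)$ be the random walk on $(G,\mu)$ and set $T^+_n=\min\{t\ge0:\zeta(X_t)\ge n\}$, $T^-_n=\min\{t\ge0:\zeta(X_t)\le n\}$. Then for $m\in\mathbb{Z}$, $R\in\mathbb{N}$ and $g\in G$ with $m<\zeta(g)<m+R$, \[\mathbb{P}_g\left[\,T^+_{m+R}<T^-_m\,\right]=\frac{\zeta(g)-m}{R+M}+O\!\left(\frac1R\right),\] where the implied constant does not depend on $m$, $R$ or $g$.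
   Context: $\mu$ is generating if the semigroup generated by $\operatorname{supp}\mu$ is $G$, symmetric if $\mu(g)=\mu(g^{-1})$. The random walk on $(G,\mu)$ started at $g$ has $X_0=g$ and $X_{n}=X_{n-1}s$ with probability $\mu(s)$ independently; $\mathbb{P}_g$ denotes its law. (Such an $M$ always exists, e.g. $M=\max\{|\zeta(ts)|:s\in S,t\in T\}$.) *)

(* Defs.v *)
From HB Require Import structures.
From mathcomp Require Import all_boot all_order all_algebra.
From mathcomp Require Import boolp classical_sets reals.
Set Implicit Arguments. Unset Strict Implicit. Unset Printing Implicit Defensive.
Import Order.TTheory GRing.Theory Num.Theory.
Local Open Scope ring_scope.

Definition is_group {G : Type} (mul : G -> G -> G) (one : G) (inv : G -> G) :=
  [/\ (forall a b c, mul a (mul b c) = mul (mul a b) c),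
      (forall a, mul one a = a) &
      (forall a, mul (inv a) a = one)].

Fixpoint gpow_nat {G : Type} (mul : G -> G -> G) (one : G) (z : G) (n : nat) : G :=
  match n with 0%N => one | k.+1 => mul z (gpow_nat mul one z k) end.

Definition gpow {G : Type} (mul : G -> G -> G) (one : G) (inv : G -> G)
  (z : G) (k : int) : G :=
  match k with
  | Posz n => gpow_nat mul one z n
  | Negz n => inv (gpow_nat mul one z n.+1)
  end.

(* all words of length n over the (duplicate-free) list S, i.e. S^n *)
Fixpoint words {G : Type} (S : seq G) (n : nat) : seq (seq G) :=
  match n with
  | 0%N => [:: [::]]
  | k.+1 => flatten [seq [seq s :: w | w <- words S k] | s <- S]
  end.

Definition walk_pos {G : Type} (mul : G -> G -> G) (g : G) (w : seq G) (t : nat) : G :=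
  foldl mul g (take t w).

(* P_g[ T^+_hi < T^-_lo and T^+_hi <= n ] for the random walk with step law mu
   supported on S: sum over all step sequences of length n of their probability
   times the indicator that some t <= n has zeta(X_t) >= hi while
   zeta(X_t') > lo for all t' <= t. *)
Definition exit_up_by {R : realType} {G : Type} (mul : G -> G -> G)
  (mu : G -> R) (S : seq G) (zeta : G -> int) (lo hi : int) (g : G) (n : nat) : R :=
  \sum_(w <- words S n)
     (\prod_(s <- w) mu s) *
     ([exists t : 'I_n.+1,
         (hi <= zeta (walk_pos mul g w t)) &&
         [forall t' : 'I_n.+1,
            (t' <= t)%N ==> (lo < zeta (walk_pos mul g w t'))]] : bool)%:R.

(* P_g[ T^+_hi < T^-_lo ] = sup_n P_g[ T^+_hi < T^-_lo, T^+_hi <= n ]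
   (continuity from below along the increasing events). *)
Definition exit_up_prob {R : realType} {G : Type} (mul : G -> G -> G)
  (mu : G -> R) (S : seq G) (zeta : G -> int) (lo hi : int) (g : G) : R :=
  sup (range (exit_up_by mul mu S zeta lo hi g)).

(* Main.v *)
Require Import Defs.
From Stdlib Require List.
From HB Require Import structures.
From mathcomp Require Import all_boot all_order all_algebra.
From mathcomp Require Import boolp classical_sets reals zify ring lra.
Import Order.TTheory GRing.Theory Num.Theory.
Local Open Scope ring_scope.
Set Implicit Arguments. Unset Strict Implicit.

Section Grp.
Variables (G : Type) (mul : G -> G -> G) (one : G) (inv : G -> G).
Hypothesis Hgrp : is_group mul one inv.

Lemma gA a b c : mul a (mul b c) = mul (mul a b) c.
Proof. by case: Hgrp. Qed.
Lemma g1m a : mul one a = a.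
Proof. by case: Hgrp. Qed.
Lemma gVm a : mul (inv a) a = one.
Proof. by case: Hgrp. Qed.
Lemma gmV a : mul a (inv a) = one.
Proof.
transitivity (mul (mul (inv (inv a)) (inv a)) (mul a (inv a))).
  by rewrite gVm g1m.
rewrite -gA [mul (inv a) (mul a _)]gA gVm g1m.
by rewrite gVm.
Qed.
Lemma gm1 a : mul a one = a.
Proof. by rewrite -(gVm a) gA gmV g1m. Qed.
Lemma gVK a : inv (inv a) = a.
Proof. by rewrite -[inv (inv a)]gm1 -(gVm a) gA gVm g1m. Qed.
Lemma gmKV a b : mul (mul a b) (inv b) = a.
Proof. by rewrite -gA gmV gm1. Qed.
Lemma gKm a b : mul (inv a) (mul a b) = b.
Proof. by rewrite gA gVm g1m. Qed.

Lemma foldl_mul g w : foldl mul g w = mul g (foldl mul one w).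
Proof.
elim: w g => [|s w IH] g /=; first by rewrite gm1.
by rewrite IH [in RHS]IH g1m gA.
Qed.

Notation gp := (gpow mul one inv).

Lemma gpow_nat_add z (a b : nat) :
  mul (gpow_nat mul one z a) (gpow_nat mul one z b) = gpow_nat mul one z (a + b).
Proof. by elim: a => [|a IH] /=; rewrite ?g1m // -gA IH. Qed.

Lemma gpow_nat_comm z (a : nat) : mul z (gpow_nat mul one z a) = mul (gpow_nat mul one z a) z.
Proof.
have := gpow_nat_add z a 1. by rewrite /= gm1 addn1 /= => ->.
Qed.

Lemma gp0 z : gp z 0 = one. Proof. by []. Qed.

Lemma invM a b : inv (mul a b) = mul (inv b) (inv a).
Proof.
rewrite -[RHS]gm1 -(gmV (mul a b)) gA -[mul (mul (inv b) (inv a)) (mul a b)]gA.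
by rewrite [mul (inv a) (mul a b)]gA gVm g1m gVm g1m.
Qed.

Lemma gpS z (k : int) : gp z (k + 1) = mul z (gp z k).
Proof.
case: k => [n|n].
  by have -> : Posz n + 1 = Posz n.+1 by lia.
case: n => [|n].
  by rewrite /= gm1 gmV.
have -> : Negz n.+1 + 1 = Negz n by rewrite !NegzE; lia.
rewrite /= -[mul z (gpow_nat mul one z n)]/(gpow_nat mul one z n.+1).
rewrite gpow_nat_comm invM gA gmV g1m //.
Qed.

Lemma gpP z (k : int) : gp z (k - 1) = mul (inv z) (gp z k).
Proof.
case: k => [[|n]|n].
- have -> : Posz 0 - 1 = Negz 0 by [].
  by rewrite /= !gm1.
- have -> : Posz n.+1 - 1 = Posz n by lia.
  by rewrite /= gKm ?gm1 //. 
- have -> : Negz n - 1 = Negz n.+1 by rewrite !NegzE; lia.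
  rewrite /= -[mul z (gpow_nat mul one z n)]/(gpow_nat mul one z n.+1).
  by rewrite -invM gpow_nat_comm.
Qed.

Lemma gpD z (a b : int) : gp z (a + b) = mul (gp z a) (gp z b).
Proof.
elim/int_rect: a b => [|n IH|n IH] b.
- by rewrite add0r g1m.
- have -> : Posz n.+1 + b = (Posz n + b) + 1 by lia.
  by rewrite gpS IH gA.
- have -> : - Posz n.+1 + b = (- Posz n + b) - 1 by lia.
  have -> : - Posz n.+1 = (- Posz n) - 1 by lia.
  by rewrite !gpP IH gA.
Qed.

End Grp.

Lemma geom_small (R : realType) (q eps : R) : 0 <= q < 1 -> 0 < eps ->
  exists j : nat, q ^+ j <= eps.
Proof.
move=> /andP [q0 q1] e0.
have key : forall j : nat, q ^+ j * (1 + j%:R * (1 - q)) <= 1.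
  elim=> [|j IH]; first by rewrite expr0 mul0r addr0 mulr1.
  have hq : q * (1 + j.+1%:R * (1 - q)) <= 1 + j%:R * (1 - q).
    rewrite -natr1; have hj : (0 : R) <= j%:R by apply: ler0n.
    have e : 1 + j%:R * (1 - q) - q * (1 + (j%:R + 1) * (1 - q)) = (1 + j%:R) * ((1 - q) * (1 - q)) by ring.
    have : 0 <= (1 + j%:R) * ((1 - q) * (1 - q)).
      by apply: mulr_ge0; [lra | apply: mulr_ge0; lra].
    lra.
  rewrite exprSr -mulrA; apply: le_trans IH.
  by apply: ler_wpM2l => //; apply: exprn_ge0.
set d := 1 - q.
have d0 : 0 < d by rewrite /d; lra.
set x := (eps * d)^-1.
have x0 : 0 <= x by rewrite /x invr_ge0; apply: mulr_ge0; apply: ltW.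
have := archi_boundP x0; set j := Num.Def.archi_bound x => hj.
exists j.
have ed : 0 < eps * d by apply: mulr_gt0.
have hjd : 1 < j%:R * d * eps.
  have : eps * d * x < eps * d * j%:R by rewrite ltr_pM2l.
  rewrite /x mulfV ?gt_eqF //.
  suff -> : j%:R * d * eps = eps * d * j%:R by [].
  ring.
have k := key j; have qj := exprn_ge0 j q0.
rewrite -/d in k.
have : q ^+ j * (j%:R * d) <= 1 by nra.
move=> h2.
have : q ^+ j * 1 <= q ^+ j * (j%:R * d * eps) by apply: ler_wpM2l => //; apply: ltW.
nra.
Qed.

Section Main.
Variables (R : realType) (G : Type) (mul : G -> G -> G) (one : G) (inv : G -> G).
Hypothesis Hgrp : is_group mul one inv.
Variable z : G.
Variables (mu : G -> R) (S : seq G).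
Hypothesis HS_uniq : List.NoDup S.
Hypothesis Hmu_pos : forall s, List.In s S -> 0 < mu s.
Hypothesis Hmu_supp : forall g, ~ List.In g S -> mu g = 0.
Hypothesis Hmu_sum : \sum_(s <- S) mu s = 1.
Hypothesis Hmu_sym : forall g, mu (inv g) = mu g.
Hypothesis Hmu_gen : forall g, exists w : seq G,
      w <> [::] /\ (forall s, List.In s w -> List.In s S) /\ g = foldl mul one w.
Variables (T : seq G) (zeta : G -> int) (tau : G -> G).
Hypothesis Hdec : forall g, g = mul (gpow mul one inv z (zeta g)) (tau g) /\ List.In (tau g) T.
Hypothesis Hdec_uniq : forall g (k : int) t, List.In t T ->
      g = mul (gpow mul one inv z k) t -> k = zeta g /\ t = tau g.
Variable (M : nat).
Hypothesis HM : forall g s, List.In s S -> (`|zeta (mul g s) - zeta g| <= M%:Z)%R.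

Local Notation gp := (gpow mul one inv z).
Local Notation gA := (gA Hgrp).
Local Notation g1m := (g1m Hgrp).
Local Notation gm1 := (gm1 Hgrp).
Local Notation gVK := (gVK Hgrp).
Local Notation gmKV := (gmKV Hgrp).
Local Notation gpD := (gpD Hgrp).

Lemma zetaT t : List.In t T -> zeta t = 0 /\ tau t = t.
Proof.
move=> Ht; have [<- <-] := @Hdec_uniq t 0 t Ht (esym (g1m t)); by [].
Qed.

Lemma tauT g : List.In (tau g) T. Proof. by case: (Hdec g). Qed.

Lemma tau_tau g : tau (tau g) = tau g. Proof. by case: (zetaT (tauT g)). Qed.
Lemma zeta_tau g : zeta (tau g) = 0. Proof. by case: (zetaT (tauT g)). Qed.

Lemma zeta_zl k g : zeta (mul (gp k) g) = k + zeta g /\ tau (mul (gp k) g) = tau g.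
Proof.
have := @Hdec_uniq (mul (gp k) g) (k + zeta g) (tau g) (tauT g).
rewrite gpD -gA -(proj1 (Hdec g)) => H; have [<- <-] := H erefl; by [].
Qed.

Lemma zeta_mulr g s : zeta (mul g s) = zeta g + zeta (mul (tau g) s)
   /\ tau (mul g s) = tau (mul (tau g) s).
Proof.
have [e _] := Hdec g; have := zeta_zl (zeta g) (mul (tau g) s).
by rewrite gA -e.
Qed.

Definition Tc : seq {classic G} := undup (T : seq {classic G}).
Definition N := size Tc.
Definition tT (i : 'I_N) : G := nth one Tc i.

Lemma In_mem (x : {classic G}) (l : seq {classic G}) : List.In x l <-> x \in l.
Proof.
elim: l => [|y l IH] //=; rewrite in_cons; split.
- by case=> [->|/IH ->]; rewrite ?eqxx ?orbT.
- by case/orP=> [/eqP ->|/IH]; [left|right].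
Qed.

Lemma NoDup_uniq (l : seq {classic G}) : List.NoDup l -> uniq l.
Proof.
elim: l => [|y l IH] //= H; inversion H; subst.
by rewrite IH // andbT; apply/negP => /In_mem.
Qed.

Lemma tau_Tc g : (tau g : {classic G}) \in Tc.
Proof. by rewrite mem_undup; apply/In_mem/tauT. Qed.

Lemma idx_lt g : (index (tau g : {classic G}) Tc < N)%N.
Proof. by rewrite index_mem tau_Tc. Qed.

Definition idx g : 'I_N := Ordinal (idx_lt g).

Lemma tT_idx g : tT (idx g) = tau g.
Proof. rewrite /tT /=. have h := (nth_index (one : {classic G}) (tau_Tc g)). exact h. Qed.

Lemma tT_In i : List.In (tT i) T.
Proof.
apply/In_mem; rewrite -mem_undup; apply: mem_nth; exact: ltn_ord.
Qed.

Lemma idx_tT i : idx (tT i) = i.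
Proof.
apply: val_inj => /=; rewrite (proj2 (zetaT (tT_In i))).
by rewrite /tT index_uniq ?undup_uniq.
Qed.

Lemma idx_tau g : idx (tau g) = idx g.
Proof. by apply: val_inj => /=; rewrite tau_tau. Qed.

Lemma idx_mul g s : idx (mul g s) = idx (mul (tT (idx g)) s).
Proof. by rewrite tT_idx; apply: val_inj => /=; rewrite (proj2 (zeta_mulr g s)). Qed.

Lemma zeta_mul g s : zeta (mul g s) = zeta g + zeta (mul (tT (idx g)) s).
Proof. by rewrite tT_idx (proj1 (zeta_mulr g s)). Qed.

Lemma tT0 i : zeta (tT i) = 0.
Proof. by case: (zetaT (tT_In i)). Qed.


Lemma gmK a b : mul a (mul (inv a) b) = b.
Proof. by rewrite gA (gmV Hgrp) g1m. Qed.

Lemma sum_pick (F : 'I_N -> R) k : \sum_j F j * (k == j)%:R = F k.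
Proof.
rewrite (bigD1 k) //= eqxx mulr1 big1 ?addr0 // => j /negPf.
by rewrite eq_sym => ->; rewrite mulr0.
Qed.

Lemma sum_ind (k : 'I_N) : \sum_j ((k == j)%:R : R) = 1.
Proof. by rewrite -[RHS](sum_pick (fun _ => 1) k); apply: eq_bigr => j _; rewrite mul1r. Qed.

Lemma sum_ge0_l (F : G -> R) (l : seq G) :
  (forall s, List.In s l -> 0 <= F s) -> 0 <= \sum_(s' <- l) F s'.
Proof.
elim: l => [|a l IH] H; rewrite ?big_nil ?big_cons //.
by rewrite addr_ge0 ?H ?IH //= => [|? ?]; [left | apply: H; right].
Qed.

Lemma sum_ge_term (F : G -> R) (l : seq G) s :
  (forall s, List.In s l -> 0 <= F s) -> List.In s l -> F s <= \sum_(s' <- l) F s'.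
Proof.
elim: l => [|a l IH] //= H [->|Hs]; rewrite big_cons.
- by rewrite lerDl; apply: sum_ge0_l => ? ?; apply: H; right.
- rewrite -[F s]add0r lerD ?H ?IH //; first by left.
  by move=> ? ?; apply: H; right.
Qed.


Definition Pm : 'M[R]_N :=
  \matrix_(i, j) \sum_(s <- S) mu s * (idx (mul (tT i) s) == j)%:R.
Definition drift : 'rV[R]_N :=
  \row_i \sum_(s <- S) mu s * (zeta (mul (tT i) s))%:~R.
Definition Am : 'M[R]_N := 1%:M - Pm^T.

Lemma rowsumP i : \sum_j Pm i j = 1.
Proof.
under eq_bigr do rewrite mxE.
rewrite exchange_big /= -[RHS]Hmu_sum; apply: eq_bigr => s _.
by rewrite -big_distrr /= sum_ind mulr1.
Qed.

Lemma idx_inv g s : idx (mul (tT (idx (mul g s))) (inv s)) = idx g.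
Proof. by rewrite -idx_mul gmKV. Qed.

Lemma colsumP i : \sum_j Pm j i = 1.
Proof.
under eq_bigr do rewrite mxE.
rewrite exchange_big /= -[RHS]Hmu_sum; apply: eq_bigr => s _.
rewrite -big_distrr /=; rewrite -[RHS]mulr1; congr (_ * _).
rewrite -[RHS](sum_ind (idx (mul (tT i) (inv s)))); apply: eq_bigr => j _.
have -> : (idx (mul (tT j) s) == i) = (idx (mul (tT i) (inv s)) == j); last by [].
apply/eqP/eqP => [<-|<-].
- by rewrite idx_inv idx_tT.
- by have := idx_inv (tT i) (inv s); rewrite gVK idx_tT.
Qed.

Lemma Pm_ge0 i j : 0 <= Pm i j.
Proof.
rewrite mxE; apply: sum_ge0_l => s Hs.
by rewrite mulr_ge0 ?ler0n // ltW // Hmu_pos.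
Qed.

Lemma Pm_ge i s : List.In s S -> mu s <= Pm i (idx (mul (tT i) s)).
Proof.
move=> Hs; rewrite mxE.
apply: le_trans (sum_ge_term (F := fun s' => mu s' * (idx (mul (tT i) s') == idx (mul (tT i) s))%:R) _ Hs).
  by rewrite eqxx mulr1.
by move=> s' Hs'; rewrite mulr_ge0 ?ler0n // ltW // Hmu_pos.
Qed.

Lemma inv_S s : List.In s S -> List.In (inv s) S.
Proof.
move=> Hs; have [//|H] := pselect (List.In (inv s) S).
have := Hmu_supp H; rewrite Hmu_sym => e.
by have := Hmu_pos Hs; rewrite e ltxx.
Qed.

Lemma sum_inv (F : G -> R) : \sum_(s <- S) F s = \sum_(s <- S) F (inv s).
Proof.
have pe : perm_eq (map inv S : seq {classic G}) (S : seq {classic G}).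
  apply: uniq_perm.
  - have inj : injective (inv : {classic G} -> {classic G}) by exact: (can_inj gVK).
    have h := map_inj_uniq inj (S : seq {classic G}). rewrite h. exact: NoDup_uniq.
  - exact: NoDup_uniq.
  move=> x; apply/idP/idP.
  + move/(@seq.mapP {classic G} {classic G} inv S x) => [y /In_mem Hy ->]; apply/In_mem; exact: inv_S.
  + move=> /In_mem Hx; rewrite -[x]gVK; apply: (@map_f {classic G} {classic G} inv); apply/In_mem; exact: inv_S.
have -> : \sum_(s <- S) F (inv s) = \sum_(s <- map inv S) F s by rewrite big_map.
have h := @perm_big R +%R 0 {classic G} _ _ xpredT F pe. exact (esym h).
Qed.

Lemma drift_sum : \sum_i drift 0 i = 0.
Proof.
under eq_bigr do rewrite mxE.
rewrite exchange_big /=.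
set D := fun s => \sum_(i < N) (zeta (mul (tT i) s))%:~R : R.
have HD s : D (inv s) = - D s.
  rewrite /D (reindex_inj (h := fun j => idx (mul (tT j) s)) (can_inj (g := fun i => idx (mul (tT i) (inv s))) _)) /=.
    rewrite -sumrN; apply: eq_bigr => j _.
    have := zeta_mul (mul (tT j) s) (inv s); rewrite gmKV tT0.
    by move=> e; rewrite -intrN; congr (_%:~R); lia.
  by move=> j; rewrite idx_inv idx_tT.
have e : \sum_(s <- S) \sum_(i < N) mu s * (zeta (mul (tT i) s))%:~R
       = \sum_(s <- S) mu s * D s.
  by apply: eq_bigr => s _; rewrite big_distrr.
rewrite e; set X := \sum_(s <- S) _.
have : X = - X.
  rewrite {1}/X sum_inv -sumrN; apply: eq_bigr => s _.
  by rewrite Hmu_sym HD mulrN.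
move=> hX; lra.
Qed.


Lemma N_gt0 : (0 < N)%N.
Proof. exact: (leq_ltn_trans (leq0n _) (ltn_ord (idx one))). Qed.

Lemma ker_const (u : 'rV[R]_N) : u *m Am = 0 -> exists c, u = c *: const_mx 1.
Proof.
move=> hu.
have hf i : u 0 i = \sum_j Pm i j * u 0 j.
  move: hu; rewrite /Am mulmxBr mulmx1 => /eqP; rewrite subr_eq0 => /eqP hu.
  rewrite {1}hu !mxE; apply: eq_bigr => j _; rewrite !mxE mulrC //.
set f := fun i => u 0 i.
case: (@arg_maxP _ _ _ (idx one) xpredT f isT) => i0 _ Hi0.
have Hmax j : f j <= f i0 by apply: Hi0.
have step g s : f (idx g) = f i0 -> List.In s S -> f (idx (mul g s)) = f i0.
  move=> hg Hs; rewrite idx_mul; set i := idx g; set k := idx (mul (tT i) s).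
  have e0 : \sum_j Pm i j * (f i0 - f j) = 0.
    under eq_bigr do rewrite mulrBr.
    rewrite sumrB -big_distrl /= rowsumP mul1r.
    have hf' : forall i, f i = \sum_j Pm i j * f j := hf.
    by rewrite -hf' hg subrr.
  have Hpos : 0 < Pm i k by apply: lt_le_trans (Hmu_pos Hs) (Pm_ge _ Hs).
  have h : Pm i k * (f i0 - f k) = 0.
    apply: (psumr_eq0P (P := xpredT) _ e0) => // j _.
    apply: mulr_ge0; [exact: Pm_ge0|by rewrite subr_ge0].
  move/eqP: h; rewrite mulf_eq0 (gt_eqF Hpos) /= subr_eq0 => /eqP; by move->.
have path w g : (forall s, List.In s w -> List.In s S) -> f (idx g) = f i0 ->
    f (idx (foldl mul g w)) = f i0.
  elim: w g => [|s w IH] g //= Hw hg.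
  apply: IH; first by move=> ? ?; apply: Hw; right.
  by apply: step => //; apply: Hw; left.
exists (f i0); apply/matrixP => a j; rewrite ord1 !mxE mulr1.
have [w [_ [Hw e]]] := Hmu_gen (mul (inv (tT i0)) (tT j)).
have := path w (tT i0) Hw; rewrite idx_tT => /(_ erefl).
by rewrite (foldl_mul Hgrp) -e gmK idx_tT.
Qed.

Lemma poisson : exists x : 'rV[R]_N, drift = x *m Am.
Proof.
have kerle : (kermx Am <= (const_mx 1 : 'rV[R]_N))%MS.
  apply/row_subP => i.
  have := mulmx_ker Am; move/(congr1 (row i)); rewrite row_mul row0.
  case/ker_const => c ->; exact: scalemx_sub.
have rk : (\rank (kermx Am) <= 1)%N := leq_trans (mxrankS kerle) (rank_leq_row _).
have rA : (N - 1 <= \rank Am)%N.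
  move: rk; rewrite mxrank_ker; have := rank_leq_col Am; lia.
set ones : 'cV[R]_N := const_mx 1.
have Aones : Am *m ones = 0.
  apply/matrixP => i k; rewrite !mxE.
  under eq_bigr do rewrite !mxE mulr1.
  have c : \sum_j \sum_(s <- S) mu s * (idx (mul (tT j) s) == i)%:R = 1.
    by rewrite -[RHS](colsumP i); apply: eq_bigr => j _; rewrite mxE.
  by rewrite sumrB sum_ind c subrr.
have AH : (Am <= kermx ones)%MS by apply/sub_kermxP.
have rH : (\rank (kermx ones) <= N - 1)%N.
  rewrite mxrank_ker.
  have : ones != 0.
    apply/eqP => /matrixP /(_ (Ordinal N_gt0) 0); rewrite !mxE => /eqP.
    by rewrite oner_eq0.
  rewrite -mxrank_eq0; lia.
have HA : (kermx ones <= Am)%MS.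
  rewrite -(mxrank_leqif_sup AH).2; have := mxrankS AH; lia.
have dH : (drift <= kermx ones)%MS.
  apply/sub_kermxP; apply/matrixP => a k; rewrite !mxE.
  rewrite -[RHS]drift_sum; apply: eq_bigr => i _.
  by rewrite /ones [const_mx 1 i k]mxE mulr1 ord1.
have := submx_trans dH HA; case/submxP => x ->; by exists x.
Qed.


Lemma harmonic_exists : exists (phi : G -> R) (B : R), 0 <= B /\
  (forall g, `|phi g| <= B) /\
  (forall g, \sum_(s <- S) mu s * ((zeta (mul g s))%:~R + phi (mul g s))
             = (zeta g)%:~R + phi g).
Proof.
have [x hx] := poisson.
exists (fun g => x 0 (idx g)), (\sum_i `|x 0 i|); split; [|split].
- by apply: sumr_ge0 => i _.
- move=> g; rewrite (bigD1 (idx g)) //= lerDl; by apply: sumr_ge0 => i _.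
move=> g; set i := idx g.
have e1 s : (zeta (mul g s))%:~R + x 0 (idx (mul g s))
    = (zeta g)%:~R + (zeta (mul (tT i) s))%:~R + x 0 (idx (mul (tT i) s)) :> R.
  by rewrite zeta_mul idx_mul intrD.
under eq_bigr do rewrite e1 !mulrDr.
rewrite !big_split /= -big_distrl /= Hmu_sum mul1r.
have d1 : \sum_(s <- S) mu s * (zeta (mul (tT i) s))%:~R = drift 0 i by rewrite mxE.
have d2 : drift 0 i = x 0 i - \sum_j x 0 j * Pm i j.
  rewrite hx !mxE.
  under eq_bigr do rewrite !mxE mulrBr.
  rewrite sumrB; congr (_ - _).
  rewrite (bigD1 i) //= eqxx mulr1 big1 ?addr0 // => j /negPf.
  by rewrite eq_sym => ->; rewrite mulr0.
  by apply: eq_bigr => j _; rewrite [Pm i j]mxE.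
have d3 : \sum_j x 0 j * Pm i j = \sum_(s <- S) mu s * x 0 (idx (mul (tT i) s)).
  transitivity (\sum_j \sum_(s <- S) x 0 j * (mu s * (idx (mul (tT i) s) == j)%:R)).
    by apply: eq_bigr => j _; rewrite mxE big_distrr.
  rewrite exchange_big /=; apply: eq_bigr => s _.
  rewrite -[RHS](congr1 (fun t => mu s * t) (sum_pick (fun j => x 0 j) (idx (mul (tT i) s)))).
  by rewrite big_distrr /=; apply: eq_bigr => j _; rewrite mulrCA.
rewrite d1 d2 d3; lra.
Qed.


Lemma mu_ge0 s : List.In s S -> 0 <= mu s.
Proof. by move=> Hs; apply: ltW; apply: Hmu_pos. Qed.

Lemma mu_le1 s : List.In s S -> mu s <= 1.
Proof. by move=> Hs; rewrite -Hmu_sum; apply: sum_ge_term Hs; apply: mu_ge0. Qed.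

Lemma ler_sum_l (l : seq G) (F F' : G -> R) :
  (forall s, List.In s l -> F s <= F' s) ->
  \sum_(s <- l) F s <= \sum_(s <- l) F' s.
Proof.
elim: l => [|a l IH] H; rewrite ?big_nil ?big_cons //.
by rewrite lerD ?H ?IH //= => [|? ?]; [left|apply: H; right].
Qed.

Lemma ler_sum_mu (F F' : G -> R) :
  (forall s, List.In s S -> F s <= F' s) ->
  \sum_(s <- S) mu s * F s <= \sum_(s <- S) mu s * F' s.
Proof.
by move=> H; apply: ler_sum_l => s Hs; apply: ler_wpM2l; [apply: mu_ge0|apply: H].
Qed.

Lemma sum_aff (c d e : R) (F F' : G -> R) :
  \sum_(s <- S) mu s * (c + d * F s + e * F' s)
  = c + d * \sum_(s <- S) mu s * F s + e * \sum_(s <- S) mu s * F' s.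
Proof.
under eq_bigr do rewrite !mulrDr.
rewrite !big_split /= -big_distrl /= Hmu_sum mul1r !big_distrr /=.
by congr (_ + _ + _); apply: eq_bigr => s _; rewrite mulrCA.
Qed.

Lemma zeta_step g s : List.In s S ->
  zeta g - M%:Z <= zeta (mul g s) <= zeta g + M%:Z.
Proof.
move=> Hs; have := HM g Hs; rewrite ler_norml => /andP [h1 h2].
apply/andP; split; lia.
Qed.

Section Prob.
Variables (lo : int) (Rn : nat).
Local Notation hi := (lo + Rn%:Z).
Variables (phi : G -> R) (B : R).
Hypothesis HB0 : 0 <= B.
Hypothesis Hphi : forall g, `|phi g| <= B.
Local Notation h g := ((zeta g)%:~R + phi g).
Hypothesis Hharm : forall g, \sum_(s <- S) mu s * h (mul g s) = h g.

Definition Ib g := (lo < zeta g) && (zeta g < hi).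

Fixpoint u n g : R :=
  if zeta g <= lo then 0 else if hi <= zeta g then 1 else
  if n is n'.+1 then \sum_(s <- S) mu s * u n' (mul g s) else 0.

Fixpoint a n g : R :=
  if Ib g then (if n is n'.+1 then \sum_(s <- S) mu s * a n' (mul g s) else 1)
  else 0.

Lemma hb g : (zeta g)%:~R - B <= h g <= (zeta g)%:~R + B.
Proof. by have := Hphi g; rewrite ler_norml => /andP [h1 h2]; apply/andP; split; lra. Qed.

Lemma Zle (x y : int) : x <= y -> (x%:~R : R) <= y%:~R.
Proof. by rewrite ler_int. Qed.

Lemma upper n g : lo - M%:Z <= zeta g -> zeta g <= hi + M%:Z ->
  (lo%:~R - M%:R - B) + (Rn%:R + M%:R) * u n g <= h g.
Proof.
elim: n g => [|n IH] g H1 H2 /=; have := hb g; move/andP=> [hb1 hb2];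
  have Z1 := Zle H1; have Z2 := Zle H2; rewrite !intrD in Z1 Z2 *;
  rewrite ?intrN in Z1 Z2.
- case: ifP => [Hl|Hl]; first by rewrite mulr0; lra.
  case: ifP => [Hh|Hh].
    have := Zle Hh; rewrite intrD => ?; rewrite mulr1; lra.
  have : lo < zeta g by rewrite ltNge Hl.
  move/ltW/Zle => ?; rewrite mulr0; lra.
- case: ifP => [Hl|Hl]; first by rewrite mulr0; lra.
  case: ifP => [Hh|Hh].
    have := Zle Hh; rewrite intrD => ?; rewrite mulr1; lra.
  rewrite -Hharm.
  have -> : lo%:~R - M%:R - B + (Rn%:R + M%:R) * \sum_(s <- S) mu s * u n (mul g s)
     = \sum_(s <- S) mu s * ((lo%:~R - M%:R - B) + (Rn%:R + M%:R) * u n (mul g s) + 0 * 0).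
    by rewrite sum_aff mul0r addr0.
  apply: ler_sum_mu => s Hs; rewrite mul0r addr0.
  have := zeta_step g Hs; move/andP => [s1 s2].
  apply: IH.
  + have : lo < zeta g by rewrite ltNge Hl. lia.
  + have : zeta g < hi by rewrite ltNge Hh. lia.
Qed.


Lemma a_out n g : ~~ Ib g -> a n g = 0.
Proof. by case: n => [|n] /= /negPf ->. Qed.

Lemma a_ge0 n g : 0 <= a n g.
Proof.
elim: n g => [|n IH] g /=; case: ifP => // _.
by apply: sum_ge0_l => s Hs; apply: mulr_ge0; [apply: mu_ge0|apply: IH].
Qed.

Lemma a_le1 n g : a n g <= 1.
Proof.
elim: n g => [|n IH] g /=; case: ifP => // _.
apply: le_trans (ler_sum_mu (F' := fun=> 1) _) _.
  by move=> s _; apply: IH.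
by under eq_bigr do rewrite mulr1; rewrite Hmu_sum.
Qed.


Lemma lower n g : lo - M%:Z <= zeta g -> zeta g <= hi + M%:Z ->
  h g <= (lo%:~R + B) + (Rn%:R + M%:R) * u n g + (Rn%:R + 2 * B) * a n g.
Proof.
elim: n g => [|n IH] g H1 H2 /=; have := hb g; move/andP=> [hb1 hb2];
  have Z1 := Zle H1; have Z2 := Zle H2; rewrite !intrD in Z1 Z2 *;
  rewrite ?intrN in Z1 Z2; rewrite /Ib.
- case: ifP => [Hl|Hl].
    have := Zle Hl => ?; rewrite mulr0 (_ : (lo < zeta g) = false) ?mulr0 /=; last first.
      by apply/negbTE; rewrite -leNgt.
    lra.
  case: ifP => [Hh|Hh].
    have := Zle Hh; rewrite intrD => ?; rewrite mulr1.
    rewrite (_ : (zeta g < lo + Rn%:Z) = false) ?andbF ?mulr0; last first.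
      by apply/negbTE; rewrite -leNgt.
    lra.
  have -> : (lo < zeta g) && (zeta g < lo + Rn%:Z) by rewrite !ltNge Hl Hh.
  have : zeta g < lo + Rn%:Z by rewrite ltNge Hh.
  move/ltW/Zle; rewrite intrD => ?; rewrite mulr0 mulr1; lra.
- case: ifP => [Hl|Hl].
    have := Zle Hl => ?; rewrite mulr0 (_ : (lo < zeta g) = false) ?mulr0 /=; last first.
      by apply/negbTE; rewrite -leNgt.
    lra.
  case: ifP => [Hh|Hh].
    have := Zle Hh; rewrite intrD => ?; rewrite mulr1.
    rewrite (_ : (zeta g < lo + Rn%:Z) = false) ?andbF ?mulr0; last first.
      by apply/negbTE; rewrite -leNgt.
    lra.
  have -> : (lo < zeta g) && (zeta g < lo + Rn%:Z) by rewrite !ltNge Hl Hh.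
  rewrite -Hharm -sum_aff.
  apply: ler_sum_mu => s Hs.
  have := zeta_step g Hs; move/andP => [s1 s2].
  apply: IH.
  + have : lo < zeta g by rewrite ltNge Hl. lia.
  + have : zeta g < hi by rewrite ltNge Hh. lia.
Qed.

Fixpoint Aop K (f : G -> R) g : R :=
  if Ib g then (if K is K'.+1 then \sum_(s <- S) mu s * Aop K' f (mul g s) else f g)
  else 0.

Lemma a_shift n K g : a (n + K) g = Aop K (a n) g.
Proof.
elim: K g => [|K IH] g /=.
  by rewrite addn0; case: ifP => // /negbT; apply: a_out.
rewrite addnS /=; case: ifP => // _; apply: eq_bigr => s _; by rewrite IH.
Qed.

Lemma Aop_le K f c g : 0 <= c -> (forall g, f g <= c) -> Aop K f g <= c * a K g.
Proof.
move=> c0 Hf; elim: K g => [|K IH] g /=; case: ifP => _; rewrite ?mulr0 ?mulr1 //.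
apply: le_trans (ler_sum_mu (F' := fun s => c * a K (mul g s)) _) _.
  by move=> s _; apply: IH.
rewrite big_distrr /= le_eqVlt; apply/orP; left; apply/eqP; apply: eq_bigr => s _; by rewrite mulrCA.
Qed.

Lemma a_geom K q : 0 <= q -> (forall g, a K g <= q) -> forall j g, a (j * K) g <= q ^+ j.
Proof.
move=> q0 HK; elim=> [|j IH] g; first by rewrite mul0n expr0; apply: a_le1.
rewrite mulSn addnC a_shift.
apply: le_trans (Aop_le _ _ _ IH) _; first by apply: exprn_ge0.
by rewrite exprSr; apply: ler_wpM2l; [apply: exprn_ge0|apply: HK].
Qed.

Fixpoint leave g (w : seq G) : bool :=
  ~~ Ib g || (if w is s :: w' then leave (mul g s) w' else false).

Lemma leave_last g w : ~~ Ib (foldl mul g w) -> leave g w.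
Proof.
elim: w g => [|s w IH] g /=; first by move=> ->.
by move/IH => ->; rewrite orbT.
Qed.

Lemma prod_ge0 (w : seq G) : (forall s, List.In s w -> List.In s S) ->
  0 <= \prod_(s <- w) mu s <= 1.
Proof.
elim: w => [|s w IH] Hw; rewrite ?big_nil ?big_cons ?ler01 ?lexx //.
have /andP [p0 p1] : 0 <= \prod_(s <- w) mu s <= 1 by apply: IH => ? ?; apply: Hw; right.
have Hs : List.In s S by apply: Hw; left.
have m0 := mu_ge0 Hs; have m1 := mu_le1 Hs.
by apply/andP; split; [apply: mulr_ge0 | apply: mulr_ile1].
Qed.

Lemma a_leave w g K : (forall s, List.In s w -> List.In s S) -> leave g w ->
  (size w <= K)%N -> a K g <= 1 - \prod_(s <- w) mu s.
Proof.
elim: w g K => [|s w IH] g K Hw /=.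
  by rewrite orbF => /a_out ->; rewrite big_nil subrr.
have Hs : List.In s S by apply: Hw; left.
have Hw' : forall s, List.In s w -> List.In s S by move=> ? ?; apply: Hw; right.
have /andP [p0 p1] := prod_ge0 Hw'.
have m0 := mu_ge0 Hs; have m1 := mu_le1 Hs.
rewrite big_cons; case/orP => [/a_out ->|Hl].
  by move=> _; rewrite subr_ge0; apply: mulr_ile1.
case: K => [|K] //= HK.
case: ifP => _; last by rewrite subr_ge0; apply: mulr_ile1.
have IHs := IH (mul g s) K Hw' Hl HK.
have e : \sum_(s' <- S) mu s' * a K (mul g s')
   = \sum_(s' <- S) mu s' - \sum_(s' <- S) mu s' * (1 - a K (mul g s')).
  rewrite -sumrB; apply: eq_bigr => s' _; rewrite mulrBr mulr1; lra.
rewrite Hmu_sum in e.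
rewrite e.
have Hpos : forall s', List.In s' S -> 0 <= mu s' * (1 - a K (mul g s')).
  move=> s' Hs'; apply: mulr_ge0; [exact: mu_ge0 Hs'|rewrite subr_ge0; apply: a_le1].
have H := @sum_ge_term (fun s' => mu s' * (1 - a K (mul g s'))) S s Hpos Hs.
have : mu s * \prod_(j <- w) mu j <= mu s * (1 - a K (mul g s)).
  by apply: ler_wpM2l => //; lra.
lra.
Qed.

Lemma mu_lb_l (l : seq G) : (forall s, List.In s l -> List.In s S) ->
  exists c, 0 < c /\ c <= 1 /\ forall s, List.In s l -> c <= mu s.
Proof.
elim: l => [|x l IH] Hl; first by exists 1; split; [exact: ltr01|split].
have [c [c0 [c1 Hc]]] := IH (fun s Hs => Hl s (or_intror Hs)).
have Hx : List.In x S by apply: Hl; left.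
have mx := Hmu_pos Hx.
have [le|lt] := lerP c (mu x).
- exists c; split => //; split => // s /= [<-|Hs]; [by []|exact: Hc].
- exists (mu x); split => //; split; first by apply: mu_le1.
  move=> s /= [<-|Hs]; first by []; have := Hc s Hs; lra.
Qed.

Lemma prod_lb c (w : seq G) : 0 <= c -> (forall s, List.In s w -> c <= mu s) ->
  c ^+ size w <= \prod_(s <- w) mu s.
Proof.
move=> c0; elim: w => [|x w IH] H; rewrite ?big_nil ?big_cons ?expr0 //=.
rewrite exprS; apply: ler_pM => //; first by apply: exprn_ge0.
- by apply: H; left.
- by apply: IH => ? ?; apply: H; right.
Qed.

Definition elt (p : 'I_Rn * 'I_N) : G := mul (gp (lo + 1 + (p.1 : nat)%:Z)) (tT p.2).

Lemma unif : exists K q, 0 <= q < 1 /\ forall g, a K g <= q.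
Proof.
have Hpath : forall p : 'I_Rn * 'I_N, exists w : seq G,
    (forall s, List.In s w -> List.In s S) /\
    foldl mul one w = mul (inv (elt p)) (mul (gp Rn%:Z) (elt p)).
  move=> p; have [w [_ [Hw e]]] := Hmu_gen (mul (inv (elt p)) (mul (gp Rn%:Z) (elt p))).
  by exists w; split.
have [W HW] := choice Hpath.
set K := \max_(p : 'I_Rn * 'I_N) size (W p).
have [c [c0 [c1 Hc]]] := mu_lb_l (fun s (Hs : List.In s S) => Hs).
have cK0 : 0 < c ^+ K by apply: exprn_gt0.
have cK1 : c ^+ K <= 1 by apply: exprn_ile1 => //; apply: ltW.
exists K, (1 - c ^+ K); split; first by apply/andP; split; lra.
move=> g; case Ibg : (Ib g); last by rewrite a_out ?Ibg //; lra.
have [g1 g2] : lo < zeta g /\ zeta g < hi by move: Ibg; rewrite /Ib => /andP.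
have hj : (absz (zeta g - lo - 1)%R < Rn)%N by lia.
set p := (Ordinal hj, idx g).
have ep : elt p = g.
  rewrite /elt /= tT_idx.
  have -> : lo + 1 + (absz (zeta g - lo - 1)%R)%:Z = zeta g by lia.
  by rewrite -(proj1 (Hdec g)).
have [Hw Hf] := HW p.
apply: le_trans (a_leave (w := W p) Hw _ _) _.
- apply: leave_last; rewrite (foldl_mul Hgrp) Hf ep gmK /Ib.
  rewrite (proj1 (zeta_zl _ _)); apply/negP => /andP [_]; lia.
- exact: (leq_bigmax (F := fun p => size (W p)) p).
- have := prod_lb (ltW c0) (fun s Hs => Hc s (Hw s Hs)).
  have : c ^+ K <= c ^+ size (W p).
    apply: ler_wiXn2l => //; first exact: ltW.
    exact: (leq_bigmax (F := fun p => size (W p)) p).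
  lra.
Qed.

Lemma words_sum (F : seq G -> R) n :
  \sum_(w <- words S n.+1) F w = \sum_(s <- S) \sum_(w <- words S n) F (s :: w).
Proof. by rewrite /= big_flatten big_map; apply: eq_bigr => s _; rewrite big_map. Qed.

Lemma words_sum1 n : \sum_(w <- words S n) \prod_(s <- w) mu s = 1.
Proof.
elim: n => [|n IH]; first by rewrite /= big_cons big_nil big_nil addr0.
rewrite words_sum -[RHS]Hmu_sum; apply: eq_bigr => s _.
under eq_bigr do rewrite big_cons.
by rewrite -big_distrr /= IH mulr1.
Qed.

Lemma words_eq (F F' : seq G -> R) n : (forall w, size w = n -> F w = F' w) ->
  \sum_(w <- words S n) F w = \sum_(w <- words S n) F' w.
Proof.
elim: n F F' => [|n IH] F F' H; first by rewrite /= !big_cons !big_nil H.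
rewrite !words_sum; apply: eq_bigr => s _; apply: IH => w hw; apply: H => /=.
by rewrite hw.
Qed.

Fixpoint ev g (w : seq G) : bool :=
  (lo < zeta g) && ((hi <= zeta g) || (if w is s :: w' then ev (mul g s) w' else false)).

Lemma u_words n g : u n g = \sum_(w <- words S n) \prod_(s <- w) mu s * (ev g w)%:R.
Proof.
elim: n g => [|n IH] g.
  rewrite /= big_cons big_nil big_nil mul1r addr0.
  rewrite /= orbF; case: ifP => Hl; first by rewrite leNgt in Hl; rewrite (negbTE Hl).
  rewrite ltNge Hl /=; by case: ifP.
rewrite words_sum /=.
case: ifP => Hl.
  rewrite leNgt in Hl; rewrite big1 // => s _; rewrite big1 // => w _.
  by rewrite (negbTE Hl) mulr0.
have Hl' : lo < zeta g by rewrite ltNge Hl.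
case: ifP => Hh.
  rewrite -[LHS](words_sum1 n.+1) words_sum; apply: eq_bigr => s _; apply: eq_bigr => w _.
  by rewrite Hl' mulr1.
apply: eq_bigr => s _; rewrite IH big_distrr; apply: eq_bigr => w _.
by rewrite Hl' /= big_cons mulrA.
Qed.

Lemma wp0 g w : walk_pos mul g w 0 = g.
Proof. by rewrite /walk_pos take0. Qed.

Lemma wpS g s w t : walk_pos mul g (s :: w) t.+1 = walk_pos mul (mul g s) w t.
Proof. by []. Qed.

Lemma evP g w : ev g w <-> exists t, (t <= size w)%N /\ hi <= zeta (walk_pos mul g w t)
   /\ forall t', (t' <= t)%N -> lo < zeta (walk_pos mul g w t').
Proof.
elim: w g => [|s w IH] g /=; split.
- case/andP => h1; rewrite orbF => h2; exists 0%N; rewrite wp0; split => //; split => //.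
- move=> [t [ht [h1 h2]]]; move: ht h1 h2; rewrite leqn0 => /eqP -> h1 h2.
  by rewrite orbF; have := h2 0%N (leqnn 0); rewrite wp0 => ->; rewrite -(wp0 g [::]) h1.
- case/andP => h1 /orP [h2|/IH [t [ht [h2 h3]]]].
    exists 0%N; rewrite wp0; split => //; split => //.
    try by move=> t'; rewrite leqn0 => /eqP ->; rewrite wp0.
  exists t.+1; split => //; split => // -[|t'] Ht'; first by rewrite wp0.
  by rewrite wpS; apply: h3.
- move=> [t [ht [h1 h2]]].
  have := h2 0%N (leq0n _); rewrite wp0 => ->; rewrite /=.
  case: t ht h1 h2 => [|t] ht h1 h2; first by rewrite wp0 in h1; rewrite h1.
  apply/orP; right; apply/IH; exists t; split => //; split => // t' Ht'.
  by rewrite -wpS; apply: h2.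
Qed.

Lemma ind_ev g w : ([exists t : 'I_(size w).+1,
         (hi <= zeta (walk_pos mul g w t)) &&
         [forall t' : 'I_(size w).+1,
            (t' <= t)%N ==> (lo < zeta (walk_pos mul g w t'))]] : bool) = ev g w.
Proof.
apply/idP/idP.
- case/existsP => t /andP [h1 /forallP h2]; apply/evP; exists t; split.
    by rewrite -ltnS ltn_ord.
  split => // t' Ht'.
  have Ht'' : (t' < (size w).+1)%N by apply: leq_ltn_trans Ht' (ltn_ord t).
  by have := h2 (Ordinal Ht''); rewrite /= Ht'.
- case/evP => t [ht [h1 h2]]; apply/existsP.
  have ht' : (t < (size w).+1)%N by rewrite ltnS.
  exists (Ordinal ht'); rewrite /= h1 /=; apply/forallP => t'; apply/implyP => Ht'.
  exact: h2.
Qed.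

Lemma exit_u n g : exit_up_by mul mu S zeta lo hi g n = u n g.
Proof.
rewrite u_words /exit_up_by; apply: words_eq => w hw.
congr (_ * _); rewrite -ind_ev; by case: _ / hw.
Qed.

End Prob.

Lemma final : exists C : R, forall (m : int) (Rn : nat) (g : G),
    m < zeta g < m + Rn%:Z ->
    `| exit_up_prob mul mu S zeta m (m + Rn%:Z) g
       - (zeta g - m)%:~R / (Rn + M)%:R | <= C / Rn%:R.
Proof.
have [phi [B [B0 [Hphi Hharm]]]] := harmonic_exists.
exists (M%:R + 2 * B + 1) => m Rn g /andP [g1 g2].
have Rn0 : (0 < Rn)%N by lia.
have Rr : (0 : R) < Rn%:R by rewrite ltr0n.
set D : R := (Rn + M)%:R.
have DE : D = Rn%:R + M%:R by rewrite /D natrD.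
have D0 : 0 < D by rewrite DE; have := ler0n R M; lra.
have J1 : m - M%:Z <= zeta g by lia.
have J2 : zeta g <= m + Rn%:Z + M%:Z by lia.
have /andP [hb1 hb2] : (zeta g)%:~R - B <= phi g + (zeta g)%:~R <= (zeta g)%:~R + B.
  by have := Hphi g; rewrite ler_norml => /andP [h1 h2]; apply/andP; split; lra.
set Z := (zeta g)%:~R : R.
set U := (Z - m%:~R + M%:R + 2 * B) / D.
have Hup n : u m Rn n g <= U.
  have := upper B0 Hphi Hharm n J1 J2.
  rewrite /U ler_pdivlMr // -DE -/Z => h; rewrite mulrC; lra.
set E := range (exit_up_by mul mu S zeta m (m + Rn%:Z) g).
have Eub : ubound E U by move=> y [n _ <-]; rewrite exit_u.
have Ene : nonempty E by exists (exit_up_by mul mu S zeta m (m + Rn%:Z) g 0%N), 0%N.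
have Hsup1 : exit_up_prob mul mu S zeta m (m + Rn%:Z) g <= U by apply: ge_sup.
have [K [q [hq HK]]] := unif m Rn B0.
have e0 : 0 < (Rn%:R + 2 * B)^-1 by rewrite invr_gt0; lra.
have [j hj] := geom_small hq e0.
set n := (j * K)%N.
have an : a m Rn n g <= (Rn%:R + 2 * B)^-1.
  apply: le_trans hj; apply: a_geom => //; by case/andP: hq.
have an' : (Rn%:R + 2 * B) * a m Rn n g <= 1.
  have hp : 0 < Rn%:R + 2 * B by lra.
  by have := ler_wpM2l (ltW hp) an; rewrite mulfV ?gt_eqF.
set L := (Z - m%:~R - 2 * B - 1) / D.
have Hlo : L <= u m Rn n g.
  have := lower B0 Hphi Hharm n J1 J2.
  rewrite /L ler_pdivrMr // -DE -/Z => h; rewrite mulrC; lra.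
have Hsup2 : L <= exit_up_prob mul mu S zeta m (m + Rn%:Z) g.
  apply: le_trans Hlo _; rewrite -exit_u; apply: ub_le_sup; last by exists n.
  by exists U.
set s := exit_up_prob _ _ _ _ _ _ _.
have eZ : (zeta g - m)%:~R = Z - m%:~R by rewrite intrB.
rewrite eZ -/D.
have e : s - (Z - m%:~R) / D = (s * D - (Z - m%:~R)) / D.
  by field; rewrite -DE gt_eqF.
rewrite e normrM normfV (gtr0_norm D0).
have h1 : `|s * D - (Z - m%:~R)| <= M%:R + 2 * B + 1.
  move: Hsup1 Hsup2; rewrite /U /L ler_pdivlMr // ler_pdivrMr // => h1 h2.
  rewrite -/s in h1 h2; have := ler0n R M => hM.
  rewrite ler_norml; apply/andP; split; lra.
apply: le_trans (ler_wpM2r _ h1) _; first by rewrite invr_ge0 ltW.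
apply: ler_wpM2l; first by have := ler0n R M; lra.
rewrite lef_pV2 ?posrE // DE; have := ler0n R M; lra.
Qed.

End Main.

Unset Implicit Arguments.
Set Strict Implicit.

Theorem lemma9p1 (R : realType) (G : Type)
  (mul : G -> G -> G) (one : G) (inv : G -> G)
  (Hgrp : is_group mul one inv)
  (Hinf : ~ exists l : seq G, forall g, List.In g l)
  (z : G)
  (Hz_inj : forall a b : int, gpow mul one inv z a = gpow mul one inv z b -> a = b)
  (Hz_normal : forall (g : G) (a : int), exists b : int,
      mul (mul g (gpow mul one inv z a)) (inv g) = gpow mul one inv z b)
  (mu : G -> R) (S : seq G)
  (HS_uniq : List.NoDup S)
  (Hmu_pos : forall s, List.In s S -> 0 < mu s)
  (Hmu_supp : forall g, ~ List.In g S -> mu g = 0)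
  (Hmu_sum : \sum_(s <- S) mu s = 1)
  (Hmu_sym : forall g, mu (inv g) = mu g)
  (Hmu_gen : forall g, exists w : seq G,
      w <> [::] /\ (forall s, List.In s w -> List.In s S) /\ g = foldl mul one w)
  (T : seq G) (zeta : G -> int) (tau : G -> G)
  (Hdec : forall g, g = mul (gpow mul one inv z (zeta g)) (tau g) /\ List.In (tau g) T)
  (Hdec_uniq : forall g (k : int) t, List.In t T ->
      g = mul (gpow mul one inv z k) t -> k = zeta g /\ t = tau g)
  (M : nat)
  (HM : forall g s, List.In s S -> (`|zeta (mul g s) - zeta g| <= M%:Z)%R) :
  exists C : R, forall (m : int) (Rn : nat) (g : G),
    m < zeta g < m + Rn%:Z ->
    `| exit_up_prob mul mu S zeta m (m + Rn%:Z) g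
       - (zeta g - m)%:~R / (Rn + M)%:R | <= C / Rn%:R.
Proof.
apply: final; eassumption.
Qed.
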